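(* For every graph $G$ and every integer $m\ge 1$, the super subdivision of $G$ (obtained by replacing every edge of $G$ by a complete bipartite graph $K_{2,m}$) admits a uniform WIASI.
   Context: All graphs are finite, simple and without isolated vertices. $\mathbb{N}_0$ denotes the set of non-negative integers; for finite $A,B\subseteq\mathbb{N}_0$, $A+B=\{a+b: a\in A, b\in B\}$. An integer additive set-indexer (IASI) of a graph $G$ is an injective map $f$ from $V(G)$ to the finite non-empty subsets of $\mathbb{N}_0$ such that the induced edge map $f^+(uv)=f(u)+f(v)$ is injective on $E(G)$. A weak IASI (WIASI) is an IASI $f$ with $|f^+(uv)|=\max(|f(u)|,|f(v)|)$ for every edge $uv$. For an integer $k\ge 2$, a WIASI $f$ is $k$-uniform if $|f^+(e)|=k$ for every edge $e$; $G$ admits a uniform WIASI (UWIASI) if it admits a $k$-uniform WIASI for some integer $k\ge 2$. In the super subdivision, each edge $uv$ of $G$ is replaced by $m$ new vertices $x_1,\dots,x_m$, each adjacent to both $u$ and $v$ (the edge $uv$ itself being removed), so that $u,v$ form the part of size $2$ of a $K_{2,m}$. *)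

(* Defs.v *)
From mathcomp Require Import all_boot.
Set Implicit Arguments. Unset Strict Implicit. Unset Printing Implicit Defensive.

(* A finite subset of N_0 is represented canonically by its strictly
   increasing list of elements; it is non-empty iff the list is non-empty. *)
Definition is_natset (s : seq nat) : bool := sorted ltn s && (s != [::]).

Definition sumset (A B : seq nat) : seq nat :=
  sort leq (undup [seq a + b | a <- A, b <- B]).

(* A graph is given by a vertex type V and an adjacency relation adj
   (an edge uv is the unordered pair {u,v} with adj u v). *)

Definition IASI (V : Type) (adj : rel V) (f : V -> seq nat) : Prop :=
  (forall v, is_natset (f v)) /\
  injective f /\
  (forall u v u' v', adj u v -> adj u' v' ->
     sumset (f u) (f v) = sumset (f u') (f v') ->
     (u = u' /\ v = v') \/ (u = v' /\ v = u')).

Definition WIASI (V : Type) (adj : rel V) (f : V -> seq nat) : Prop :=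
  IASI adj f /\
  (forall u v, adj u v ->
     size (sumset (f u) (f v)) = maxn (size (f u)) (size (f v))).

Definition k_uniform_WIASI (V : Type) (adj : rel V) (k : nat) (f : V -> seq nat) : Prop :=
  WIASI adj f /\ (forall u v, adj u v -> size (sumset (f u) (f v)) = k).

Definition admits_UWIASI (V : Type) (adj : rel V) : Prop :=
  exists k, 2 <= k /\ exists f : V -> seq nat, k_uniform_WIASI adj k f.

Definition simple_graph_no_isolated (T : finType) (e : rel T) : Prop :=
  symmetric e /\ irreflexive e /\ (forall x, exists y, e x y).

(* Super subdivision with parameter m: vertices are the old vertices (inl u)
   and, for every edge A = {u,v} of G and i < m, a new vertex inr (A, i). *)
Definition ss_valid (T : finType) (e : rel T) (m : nat)
    (x : T + ({set T} * 'I_m)) : bool :=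
  match x with
  | inl _ => true
  | inr (A, _) => [exists u, exists v, e u v && (A == [set u; v])]
  end.

Definition ss_vertex (T : finType) (e : rel T) (m : nat) : Type :=
  {x : T + ({set T} * 'I_m) | ss_valid e x}.

Definition ss_adj_raw (T : finType) (m : nat)
    (x y : T + ({set T} * 'I_m)) : bool :=
  match x, y with
  | inl u, inr (A, _) => u \in A
  | inr (A, _), inl u => u \in A
  | _, _ => false
  end.

Definition ss_adj (T : finType) (e : rel T) (m : nat) : rel (ss_vertex e m) :=
  fun x y => ss_adj_raw (val x) (val y).

(* Main.v *)
Require Import Defs.
From mathcomp Require Import all_boot.
Set Implicit Arguments. Unset Strict Implicit. Unset Printing Implicit Defensive.

Section S.
Variables (T : finType) (e : rel T) (m : nat).
Let V := ss_vertex e m.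
Definition N := #|T|.+1.

Definition cd (x : V) : nat := N * (pickle (val x)).+1.
Arguments cd : simpl never.
Definition lab (x : V) : seq nat :=
  match val x with
  | inl u => [:: (enum_rank u : nat)]
  | inr _ => [:: cd x; (cd x).+1]
  end.

Lemma lab_l x u : val x = inl u -> lab x = [:: (enum_rank u : nat)].
Proof. by rewrite /lab => ->. Qed.
Lemma lab_r x p : val x = inr p -> lab x = [:: cd x; (cd x).+1].
Proof. by rewrite /lab => ->. Qed.

Lemma sumset12 a c : sumset [:: a] [:: c; c.+1] = [:: a + c; (a + c).+1].
Proof.
rewrite /sumset /= !in_cons /= !addnS.
have -> : (a + c == (a + c).+1) = false by rewrite eqn_leq ltnn andbF.
by rewrite /= sorted_sort //= ?leqnSn //; exact: leq_trans.
Qed.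

Lemma sumset21 a c : sumset [:: c; c.+1] [:: a] = [:: a + c; (a + c).+1].
Proof.
rewrite /sumset /= !in_cons /= addSn.
have -> : (c + a == (c + a).+1) = false by rewrite eqn_leq ltnn andbF.
by rewrite /= sorted_sort //= ?leqnSn ?(addnC c) //; exact: leq_trans.
Qed.

Definition key (u : T) (w : V) := (enum_rank u : nat) + cd w.

Lemma edge_sum (x y : V) : ss_adj x y -> exists u w,
  ((val x = inl u /\ y = w) \/ (val y = inl u /\ x = w)) /\
  (exists A, val w = inr A) /\
  sumset (lab x) (lab y) = [:: key u w; (key u w).+1].
Proof.
case: x => [[u|[A i]] Hx]; case: y => [[v|[B j]] Hy] //= H.
- exists u, (exist _ (inr (B, j)) Hy); split; first by left.
  split; first by exists (B, j).
  by rewrite /lab /= sumset12.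
- exists v, (exist _ (inr (A, i)) Hx); split; first by right.
  split; first by exists (A, i).
  by rewrite /lab /= sumset21.
Qed.

Lemma key_inj u w u' w' : key u w = key u' w' -> u = u' /\ w = w'.
Proof.
rewrite /key /cd => H.
have N0 : 0 < N by [].
have Hr : forall (z : T), (enum_rank z : nat) < N by move=> z; rewrite /N ltnS ltnW ?ltn_ord.
have H1 := congr1 (fun s => s %% N) H.
have H2 := congr1 (fun s => s %/ N) H.
rewrite /= ![_ + N * _]addnC ![N * _]mulnC !modnMDl !modn_small ?Hr // in H1.
rewrite /= ![_ + N * _]addnC ![N * _]mulnC !divnMDl // !divn_small ?Hr // !addn0 in H2.
split.
- by apply: enum_rank_inj; apply: val_inj.
- case: H2 => /(pcan_inj (@pickleK _)) H2; exact: val_inj.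
Qed.

End S.


Theorem mainTheorem16 (T : finType) (e : rel T) (m : nat) :
  simple_graph_no_isolated e -> 1 <= m ->
  admits_UWIASI (@ss_adj T e m).
Proof.
move=> _ _; exists 2; split => //; exists (@lab T e m).
have Hsz : forall x y : ss_vertex e m, ss_adj x y -> size (sumset (lab x) (lab y)) = 2.
  by move=> x y H; case: (edge_sum H) => [u [w [_ [_ ->]]]].
split; last exact: Hsz.
split; last first.
  move=> u v Huv; rewrite (Hsz u v Huv).
  case: u Huv => [[a|[A i]] Ha]; case: v => [[b|[B j]] Hb] //= _.
split; [|split].
- move=> [[a|[A i]] Ha]; rewrite /lab /is_natset /=.
  by []. by rewrite andbT ltnSn.
- move=> x y; case Ex: (val x) => [a|p]; case Ey: (val y) => [b|q];
    rewrite ?(lab_l Ex) ?(lab_r Ex) ?(lab_l Ey) ?(lab_r Ey).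
  + case=> /ord_inj /enum_rank_inj H; subst; apply: val_inj; by rewrite Ex Ey.
  + by case.
  + by case.
  + move/(congr1 (head 0)) => /= H; apply: val_inj; apply: (pcan_inj (@pickleK _)).
    move: H; rewrite /cd => /eqP; rewrite eqn_mul2l => /orP [//|/eqP []] //.
- move=> x y x' y' /(@edge_sum T e m) [u [w [Hc [_ ->]]]] /(@edge_sum T e m) [u' [w' [Hc' [_ ->]]]].
  move/(congr1 (head 0)) => /= /key_inj [? ?]; subst u' w'.
  case: Hc => [[Hx ->]|[Hy ->]]; case: Hc' => [[Hx' ->]|[Hy' ->]].
  + by left; split => //; apply: val_inj; rewrite Hx Hx'.
  + by right; split => //; apply: val_inj; rewrite Hx Hy'.
  + by right; split => //; apply: val_inj; rewrite Hy Hx'.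
  + by left; split => //; apply: val_inj; rewrite Hy Hy'.
Qed.
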